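(* Let $D$ be a Dyck path of semilength $n$, let $\mathcal N$ be the set of $k\in\{1,\dots,n\}$ such that row $k$ contains no valley of $D$, and let $\pi$ be the permutation associated with $D$ by the Billey–Jockusch–Stanley bijection. Then $k\in\mathcal N$ if and only if $\pi^{-1}(k)\ge k$, i.e. if and only if $\pi^{-1}(k)$ is a fixpoint or a deficiency of $\pi$.
   Context: Work in an $n\times n$ array of unit cells; the cell $(i,j)$ is the one in column $i$ (columns numbered $1,\dots,n$ from left to right) and row $j$ (rows numbered $1,\dots,n$ from bottom to top), i.e. the square $[i-1,i]\times[j-1,j]$. A Dyck path of semilength $n$ is a lattice path from $(0,0)$ to $(n,n)$ with unit north and east steps that never goes below the line $y=x$. A valley of $D$ is an east step immediately followed by a north step; if the east step is the $k$-th east step and the north step is the $\ell$-th north step, the valley is at position $(k,\ell)$, the cell enclosed by these two steps (it lies in row $\ell$). Billey–Jockusch–Stanley bijection: put a cross in every valley cell of $D$; then, for the columns $i=1,2,\dots,n$ in this order, if column $i$ does not yet contain a cross, put a cross in the lowest cell of column $i$ whose row does not yet contain a cross. The crosses form a permutation matrix, and $\pi(i)$ is the row of the cross in column $i$. An index $m$ is a fixpoint of $\pi$ if $\pi(m)=m$ and a deficiency if $\pi(m)<m$. *)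

(* Defs.v *)
From mathcomp Require Import all_boot.
Set Implicit Arguments. Unset Strict Implicit. Unset Printing Implicit Defensive.

(* A lattice path is a sequence of steps: true = north step, false = east step. *)
Definition nsteps (p : seq bool) : nat := count id p.
Definition esteps (p : seq bool) : nat := count negb p.

Definition dyck (n : nat) (p : seq bool) : Prop :=
  size p = 2 * n /\ nsteps p = n /\
  forall t, esteps (take t p) <= nsteps (take t p).

(* Valleys: an east step at index t followed by a north step at index t+1.
   If it is the k-th east step and the l-th north step, the valley is at
   position (k, l) (column k, row l). *)
Definition valleys (p : seq bool) : seq (nat * nat) :=
  [seq (esteps (take t.+1 p), nsteps (take t.+2 p))
   | t <- iota 0 (size p).-1 & (~~ nth false p t) && nth false p t.+1].

Definition valley_rows (p : seq bool) : seq nat := map snd (valleys p).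

Definition valley_in_col (p : seq bool) (i : nat) : option nat :=
  let v := [seq x <- valleys p | x.1 == i] in
  if v is x :: _ then Some x.2 else None.

Definition lowest_free (n : nat) (used : seq nat) : nat :=
  head 0 [seq r <- iota 1 n | r \notin used].

(* Billey–Jockusch–Stanley: process columns in order; [used] is the set of
   rows already containing a cross. Returns the rows of the crosses. *)
Fixpoint bjs_build (n : nat) (p : seq bool) (cols used : seq nat) : seq nat :=
  match cols with
  | [::] => [::]
  | i :: cs =>
      match valley_in_col p i with
      | Some r => r :: bjs_build n p cs used
      | None => let r := lowest_free n used in r :: bjs_build n p cs (r :: used)
      end
  end.

(* pi(i) = row of the cross in column i, for 1 <= i <= n. *)
Definition bjs_perm (n : nat) (p : seq bool) (i : nat) : nat :=
  nth 0 (bjs_build n p (iota 1 n) (valley_rows p)) i.-1.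

(* Main.v *)
Require Import Defs.
From mathcomp Require Import all_boot zify.

Lemma count_take_mono (T : Type) (P : pred T) (s : seq T) a b :
  a <= b -> count P (take a s) <= count P (take b s).
Proof. by move=> ab; rewrite -(subnKC ab) takeD count_cat leq_addr. Qed.

Lemma count_take_step (T : Type) (x0 : T) (P : pred T) (s : seq T) t :
  t < size s -> count P (take t.+1 s) = count P (take t s) + P (nth x0 s t).
Proof. by move=> ht; rewrite (take_nth x0 ht) -cats1 count_cat /= addn0. Qed.

Lemma count_take_le (T : Type) (P : pred T) (s : seq T) t :
  count P (take t s) <= count P s.
Proof. by rewrite -{2}(cat_take_drop t s) count_cat leq_addr. Qed.

Definition Lof (D : seq bool) := [seq t <- iota 0 (size D).-1 | (~~ nth false D t) && nth false D t.+1].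

Lemma valleysE (D : seq bool) : valleys D =
  map (fun t => (esteps (take t.+1 D), nsteps (take t.+2 D))) (Lof D).
Proof. by []. Qed.

Lemma inL (D : seq bool) t : t \in Lof D -> [/\ t.+1 < size D, nth false D t = false & nth false D t.+1 = true].
Proof.
rewrite mem_filter mem_iota => /andP [/andP [h1 h2] /andP [_ h3]].
split; first by lia.
  by move: h1; case: (nth false D t).
by [].
Qed.

Lemma inL_facts (D : seq bool) t : t \in Lof D ->
  [/\ esteps (take t.+1 D) = esteps (take t D) + 1,
      nsteps (take t.+1 D) = nsteps (take t D),
      esteps (take t.+2 D) = esteps (take t.+1 D) &
      nsteps (take t.+2 D) = nsteps (take t.+1 D) + 1].
Proof.
move=> /inL [h1 h2 h3].
have h0 : t < size D by lia.
rewrite /esteps /nsteps (count_take_step _ false negb _ _ h0) (count_take_step _ false id _ _ h0)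
  (count_take_step _ false negb _ _ h1) (count_take_step _ false id _ _ h1) h2 h3.
by split; rewrite ?(count_take_step _ false negb _ _ h0) ?(count_take_step _ false id _ _ h0) ?h2 /=; lia.
Qed.

Lemma V1 n (D : seq bool) (hD : dyck n D) x : x \in valleys D -> 1 <= x.1 < x.2 /\ x.2 <= n.
Proof.
case: hD => [_ [hn hp]].
rewrite valleysE => /mapP [t tL ->] /=.
have [e1 n1 e2 n2] := inL_facts _ _ tL.
have := hp t.+1.
have := count_take_le _ id D t.+2.
rewrite /nsteps /esteps in e1 n1 e2 n2 hn * .
lia.
Qed.

Lemma V2 (D : seq bool) : uniq (map fst (valleys D)).
Proof.
rewrite valleysE -map_comp map_inj_in_uniq ?filter_uniq ?iota_uniq //.
have key : forall t t', t \in Lof D -> t' \in Lof D -> t < t' ->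
    esteps (take t.+1 D) < esteps (take t'.+1 D).
  move=> t t' tL t'L tt.
  have [e1 _ _ _] := inL_facts _ _ t'L.
  have := count_take_mono _ negb D _ _ tt.
  rewrite /esteps in e1 *; lia.
move=> t t' tL t'L /= eq.
case: (ltngtP t t') => // h.
  by have := key _ _ tL t'L h; rewrite eq ltnn.
by have := key _ _ t'L tL h; rewrite eq ltnn.
Qed.

Lemma V3 (D : seq bool) : uniq (map snd (valleys D)).
Proof.
rewrite valleysE -map_comp map_inj_in_uniq ?filter_uniq ?iota_uniq //.
have key : forall t t', t \in Lof D -> t' \in Lof D -> t < t' ->
    nsteps (take t.+2 D) < nsteps (take t'.+2 D).
  move=> t t' tL t'L tt.
  have [_ _ _ n2] := inL_facts _ _ t'L.
  have := count_take_mono _ id D t.+2 t'.+1 tt.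
  rewrite /nsteps in n2 *; lia.
move=> t t' tL t'L /= eq.
case: (ltngtP t t') => // h.
  by have := key _ _ tL t'L h; rewrite eq ltnn.
by have := key _ _ t'L tL h; rewrite eq ltnn.
Qed.



Lemma VIC_none D i : (valley_in_col D i == None) = (i \notin map fst (valleys D)).
Proof.
rewrite /valley_in_col.
case E: [seq x <- valleys D | x.1 == i] => [|x v].
  apply/esym/negP => /mapP [x xV ix].
  have : has (fun x : nat * nat => x.1 == i) (valleys D).
    by apply/hasP; exists x; rewrite // ix.
  by rewrite has_filter E.
have : x \in [seq x <- valleys D | x.1 == i] by rewrite E mem_head.
by rewrite mem_filter => /andP [/eqP <- xV]; rewrite map_f.
Qed.

Lemma VIC_some D i r : valley_in_col D i = Some r -> (i, r) \in valleys D.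
Proof.
rewrite /valley_in_col.
case E: [seq x <- valleys D | x.1 == i] => [|x v] //= [<-].
have : x \in [seq x <- valleys D | x.1 == i] by rewrite E mem_head.
by rewrite mem_filter => /andP [/eqP <- xV]; case: x xV {E}.
Qed.

Lemma inv_step n NR (uNR : uniq NR) used a :
  [seq r <- iota 1 n | r \notin used] = drop a NR ->
  [seq r <- iota 1 n | r \notin lowest_free n used :: used] = drop a.+1 NR.
Proof.
move=> H.
have -> : [seq r <- iota 1 n | r \notin lowest_free n used :: used] =
   [seq x <- [seq r <- iota 1 n | r \notin used] | x != lowest_free n used].
  by rewrite -filter_predI; apply: eq_filter => x; rewrite /= inE negb_or andbC.
rewrite /lowest_free H.
case: (ltnP a (size NR)) => ha.
  have uD : uniq (drop a NR) by rewrite drop_uniq.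
  rewrite (drop_nth 0 ha) in uD *.
  move: uD => /= /andP [nin uD].
  rewrite eqxx /=; apply/all_filterP/allP => y yin /=.
  by apply/eqP => yx; rewrite -yx yin in nin.
by rewrite !drop_oversize // (leq_trans ha).
Qed.

Lemma build_nth n D NR (uNR : uniq NR) cs a used :
  [seq r <- iota 1 n | r \notin used] = drop a NR ->
  forall t, t < size cs -> nth 0 (bjs_build n D cs used) t =
    match valley_in_col D (nth 0 cs t) with
    | Some r => r
    | None => nth 0 NR (a + count (fun i => valley_in_col D i == None) (take t cs))
    end.
Proof.
elim: cs a used => [|i cs IH] a used H [|t] //= ht.
  case: (valley_in_col D i) => [r|] //=.
  by rewrite /lowest_free H -nth0 nth_drop addn0.
case E: (valley_in_col D i) => [r|] /=.
  by rewrite (IH a used H t ht) add0n.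
rewrite (IH a.+1 _ (inv_step n NR uNR used a H) t ht).
case: (valley_in_col D (nth 0 cs t)) => // .
by rewrite add1n addnS addSn.
Qed.


Lemma count_iota_mono (f : pred nat) a b : a <= b ->
  count f (iota 1 a) <= count f (iota 1 b).
Proof. by move=> ab; rewrite -(subnKC ab) iotaD count_cat leq_addr. Qed.

Lemma ivt (f : pred nat) j d0 N : count f (iota 1 d0) <= j < count f (iota 1 N) ->
  exists d, [/\ d0 <= d < N, f d.+1 & count f (iota 1 d) = j].
Proof.
elim: N => [|N IH] /andP [h1 h2]; first by move: h2; rewrite /= ltn0.
have e : iota 1 N.+1 = iota 1 N ++ [:: N.+1].
  by rewrite -[N.+1]addn1 iotaD add1n addn1.
case: (ltnP j (count f (iota 1 N))) => h3.
  have [d [hd fd cd]] := IH (introT andP (conj h1 h3)).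
  by exists d; split=> //; move: hd => /andP [? ?]; apply/andP; split=> //; lia.
have fN : f N.+1.
  by move: h2; rewrite e count_cat /=; case: (f N.+1) => //=; lia.
have cN : count f (iota 1 N) = j by move: h2; rewrite e count_cat /= fN; lia.
exists N; split=> //; apply/andP; split=> //.
rewrite leqNgt; apply/negP => hlt.
have := count_iota_mono f _ _ hlt.
rewrite e count_cat /= fN; lia.
Qed.

Theorem mainTheorem5 (n : nat) (D : seq bool) :
  dyck n D ->
  forall k, 1 <= k <= n ->
    (k \notin valley_rows D) <->
    (exists m, [/\ 1 <= m <= n, bjs_perm n D m = k & k <= m]).
Proof.
move=> hD k /andP [k1 kn].
set VR := valley_rows D.
set VC := map fst (valleys D).
set NR := [seq r <- iota 1 n | r \notin VR].
set isNV := fun i => valley_in_col D i == None.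
have uNR : uniq NR by rewrite filter_uniq ?iota_uniq.
have pi_eq : forall m, 1 <= m <= n -> bjs_perm n D m =
    match valley_in_col D m with
    | Some r => r | None => nth 0 NR (count isNV (iota 1 m.-1)) end.
  move=> m /andP [m1 mn].
  have H : [seq r <- iota 1 n | r \notin VR] = drop 0 NR by rewrite drop0.
  have ht : m.-1 < size (iota 1 n) by rewrite size_iota; lia.
  rewrite /bjs_perm (build_nth n D NR uNR (iota 1 n) 0 VR H m.-1 ht).
  rewrite nth_iota; last lia.
  rewrite take_iota add0n (_ : 1 + m.-1 = m); last lia.
  by rewrite (_ : minn m.-1 n = m.-1) //; lia.
split.
- move=> kVR.
  set P := fun r : nat => r \notin VR.
  set j := count P (iota 1 k.-1).
  have split_iota : iota 1 n = iota 1 k.-1 ++ k :: iota k.+1 (n - k).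
    rewrite {1}(_ : n = k.-1 + (n - k).+1); last lia.
    by rewrite iotaD (_ : 1 + k.-1 = k) //; lia.
  have NRsplit : NR = [seq r <- iota 1 k.-1 | P r] ++ k :: [seq r <- iota k.+1 (n - k) | P r].
    by rewrite /NR split_iota filter_cat /= {2}/P kVR.
  have nthj : nth 0 NR j = k by rewrite NRsplit nth_cat size_filter ltnn subnn.
  have jlt : j < count P (iota 1 n).
    rewrite split_iota count_cat /= {2}/P kVR /j; rewrite add1n addnS ltnS leq_addr //.
  have cmpl1 : forall s : seq nat, count isNV s + count (fun i => i \in VC) s = size s.
    move=> s; rewrite -(count_predC (fun i => i \in VC)) addnC; congr (_ + _).
    by apply: eq_count => i; rewrite /isNV VIC_none.
  have cmpl2 : forall s : seq nat, count P s + count (fun i => i \in VR) s = size s.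
    by move=> s; rewrite -(count_predC (fun i => i \in VR)) addnC.
  have hV1 := V1 _ _ hD.
  have hV2 := V2 D.
  have hV3 := V3 D.
  have hVC_le : count (fun i => i \in VC) (iota 1 n) <= count (fun i => i \in VR) (iota 1 n).
    rewrite -!size_filter.
    apply: (@leq_trans (size VC)).
      apply: uniq_leq_size; first by rewrite filter_uniq ?iota_uniq.
      by move=> x; rewrite mem_filter => /andP [].
    apply: (@leq_trans (size VR)); first by rewrite /VC /VR /valley_rows !size_map.
    apply: uniq_leq_size => // r /mapP [[a b] xV ->].
    rewrite mem_filter map_f //= mem_iota.
    by move: (hV1 _ xV) => /= [/andP [? ?] ?]; lia.
  have hjNC : j < count isNV (iota 1 n).
    have := cmpl1 (iota 1 n); have := cmpl2 (iota 1 n); lia.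
  set V' := [seq x <- valleys D | x.2 < k].
  have hkey0 : count (fun i => i \in VR) (iota 1 k.-1) <= count (fun i => i \in VC) (iota 1 k.-1).
    rewrite -!size_filter.
    apply: (@leq_trans (size (map snd V'))).
      apply: uniq_leq_size; first by rewrite filter_uniq ?iota_uniq.
      move=> y; rewrite mem_filter mem_iota => /andP [/mapP [[a b] xV ->] hy].
      by rewrite map_f // mem_filter xV andbT; lia.
    rewrite size_map -(size_map fst).
    apply: uniq_leq_size.
      exact: (subseq_uniq (map_subseq fst (filter_subseq _ _)) hV2).
    move=> y /mapP [[a b] ab ->]; rewrite /V' mem_filter in ab; case/andP: ab => hx xV /=.
    rewrite ?mem_filter /VC (map_f fst xV) /= mem_iota.
    by move: (hV1 _ xV) hx => /= [/andP [? ?] ?] ?; lia.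
  have hkey : count isNV (iota 1 k.-1) <= j.
    have := cmpl1 (iota 1 k.-1); have := cmpl2 (iota 1 k.-1); rewrite /j; lia.
  have [d [hd fd cd]] := ivt isNV j k.-1 n (introT andP (conj hkey hjNC)).
  exists d.+1; split.
  + apply/andP; split=> //; lia.
  + rewrite pi_eq; last (apply/andP; split=> //; lia).
    by move: fd; rewrite /isNV => /eqP ->; rewrite /= cd.
  + lia.
- move=> [m [/andP [m1 mn] hm km]].
  apply/negP => kVR.
  move: hm; rewrite pi_eq; last by apply/andP.
  case E: (valley_in_col D m) => [r|].
    move=> rk; have := V1 _ _ hD _ (VIC_some _ _ _ E); rewrite /= rk; lia.
  move=> hk.
  case: (ltnP (count isNV (iota 1 m.-1)) (size NR)) => hj.
    by have := mem_nth 0 hj; rewrite hk mem_filter kVR.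
  by rewrite nth_default in hk => //; subst k.
Qed.
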